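(* Let $p,r$ be positive integers, $s=p+2r$, and write elements of $\mathbb{R}^{(p+s)\times p}$ as $X=(X_0;X_1;X_2;X_3)$ with blocks $X_0,X_1\in\mathbb{R}^{p\times p}$, $X_2,X_3\in\mathbb{R}^{r\times p}$; set $A=X_0-X_1$, $B=X_0+X_1$, $W=X_2+iX_3$. Let $\hat M$ be an element of the complexification $\mathfrak{so}(p,r)^{\mathbb{C}}$ and define $\hat\Phi:\mathbb{R}^{(p+s)\times p}\to\mathbb{C}^{(p+r)\times p}$ by $\hat\Phi(X)=\binom{A}{W}+\hat M\binom{B}{\bar W}$. Then the complex valued components of $\hat\Phi$ constitute an orthogonal harmonic family on $\mathbb{R}^{(p+s)\times p}$ equipped with the semi-Euclidean metric.
   Context: The semi-Euclidean metric on $\mathbb{R}^{(p+s)\times p}$ is $(X,Y)=\mathrm{trace}(X^tI_{ps}Y)$ with $I_{ps}=\mathrm{diag}(-I_p,I_s)$, i.e. the first $p$ rows (the block $X_0$) are negative. $\mathfrak{so}(p,r)^{\mathbb{C}}=\{M\in\mathbb{C}^{(p+r)\times(p+r)}: M^tI_{pr}+I_{pr}M=0\}$ with $I_{pr}=\mathrm{diag}(-I_p,I_r)$. For a semi-Riemannian manifold $(M,g)$ and complex functions $\phi,\psi$, $\tau(\phi)$ is the Laplace–Beltrami operator (extended complex-linearly) and $\kappa(\phi,\psi)=g(\mathrm{grad}\,\phi,\mathrm{grad}\,\psi)$ with $g$ extended complex-bilinearly. A set $\Omega$ of complex functions is an orthogonal harmonic family if $\tau(\phi)=0$ and $\kappa(\phi,\psi)=0$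 for all $\phi,\psi\in\Omega$. *)

(* Defs.v *)
From HB Require Import structures.
From mathcomp Require Import all_boot all_order all_algebra.
From mathcomp Require Import complex.
From mathcomp Require Import all_classical all_reals all_analysis.
Set Implicit Arguments.
Unset Strict Implicit.
Unset Printing Implicit Defensive.
Import Order.TTheory GRing.Theory Num.Theory.
Local Open Scope ring_scope.

Section Defs.
Variable R : realType.

Definition pdC (n m : nat) (a : 'I_n) (b : 'I_m) (f : 'M[R]_(n, m) -> R[i])
  : 'M[R]_(n, m) -> R[i] :=
  fun X => (('D_(delta_mx a b) (fun Y => complex.Re (f Y)) X)
           +i* ('D_(delta_mx a b) (fun Y => complex.Im (f Y)) X))%C.

(* semi-Euclidean metric on R^{(p+s) x p}: (X,Y) = trace(X^t I_ps Y),
   I_ps = diag(-I_p, I_s): the coefficient of the coordinate x_{ab} is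
   eps a = -1 if a < p, +1 otherwise.  It is diagonal with entries +-1, so
   g^{-1} has the same diagonal. *)
Definition sE_eps (p s : nat) (a : 'I_(p + s)) : R[i] :=
  if (a < p)%N then -1 else 1.

(* Laplace--Beltrami operator of the flat semi-Euclidean metric, extended
   complex-linearly:  tau(f) = sum_{a,b} eps_a d^2 f / d x_{ab}^2 *)
Definition tau (p s : nat) (f : 'M[R]_(p + s, p) -> R[i]) : 'M[R]_(p + s, p) -> R[i] :=
  fun X => \sum_(a < p + s) \sum_(b < p) sE_eps a * pdC a b (pdC a b f) X.

(* kappa(f,g) = g(grad f, grad g), complex bilinear *)
Definition kappa (p s : nat) (f g : 'M[R]_(p + s, p) -> R[i])
  : 'M[R]_(p + s, p) -> R[i] :=
  fun X => \sum_(a < p + s) \sum_(b < p) sE_eps a * (pdC a b f X * pdC a b g X).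

Definition orthogonal_harmonic_family (p s : nat) (Omega : (('M[R]_(p + s, p) -> R[i]) -> Prop)) :=
  (forall f, Omega f -> forall X, tau f X = 0) /\
  (forall f g, Omega f -> Omega g -> forall X, kappa f g X = 0).

Definition Ipr (p r : nat) : 'M[R[i]]_(p + r) :=
  block_mx (- 1%:M) 0 0 1%:M.

Definition in_soC (p r : nat) (M : 'M[R[i]]_(p + r)) : Prop :=
  M^T *m Ipr p r + Ipr p r *m M = 0.

(* the map Phi-hat, with s = p + 2r written as p + (r + r) and
   X = (X0; X1; X2; X3) *)
Definition Phihat (p r : nat) (M : 'M[R[i]]_(p + r))
  (X : 'M[R]_(p + (p + (r + r)), p)) : 'M[R[i]]_(p + r, p) :=
  let X0 := usubmx X in
  let X1 := usubmx (dsubmx X) in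
  let X2 := usubmx (dsubmx (dsubmx X)) in
  let X3 := dsubmx (dsubmx (dsubmx X)) in
  let A := \matrix_(i < p, j < p) ((X0 i j - X1 i j)%:C)%C in
  let B := \matrix_(i < p, j < p) ((X0 i j + X1 i j)%:C)%C in
  let W := \matrix_(i < r, j < p) (X2 i j +i* X3 i j)%C in
  let Wbar := \matrix_(i < r, j < p) (X2 i j -i* X3 i j)%C in
  col_mx A W + M *m col_mx B Wbar.

End Defs.

(* Main.v *)
Require Import Defs.
From HB Require Import structures.
From mathcomp Require Import all_boot all_order all_algebra.
From mathcomp Require Import complex.
From mathcomp Require Import all_classical all_reals all_analysis.
From mathcomp Require Import ring.
Local Open Scope classical_set_scope.
Import Order.TTheory GRing.Theory Num.Theory.
Local Open Scope ring_scope.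

Lemma cA (R : realType) (h a b c d : R) :
  ((h*a+b) - (h*c+d))%:C%C = h%:C%C * (a - c)%:C%C + (b - d)%:C%C :> R[i].
Proof. by rewrite !rmorphB !rmorphD !rmorphM /=; ring. Qed.
Lemma cW (R : realType) (h a b c d : R) :
  ((h*a+b) +i* (h*c+d))%C = h%:C%C * (a +i* c)%C + (b +i* d)%C :> R[i].
Proof. apply/eqP; rewrite eq_complex /=. apply/andP; split; apply/eqP; ring. Qed.
Lemma cWb (R : realType) (h a b c d : R) :
  ((h*a+b) -i* (h*c+d))%C = h%:C%C * (a -i* c)%C + (b -i* d)%C :> R[i].
Proof. apply/eqP; rewrite eq_complex /=. apply/andP; split; apply/eqP; ring. Qed.
Lemma cB (R : realType) (h a b c d : R) :
  ((h*a+b) + (h*c+d))%:C%C = h%:C%C * (a + c)%:C%C + (b + d)%:C%C :> R[i].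
Proof. by rewrite !rmorphD !rmorphM /=; ring. Qed.

Lemma Phihat_lin (R : realType) (p r : nat) (M : 'M[R[i]]_(p + r)) (h : R) v x k l :
  Phihat M (h *: v + x) k l = h%:C%C * Phihat M v k l + Phihat M x k l.
Proof.
rewrite /Phihat !linearD !linearZ /= !mxE.
rewrite mulrDr addrACA; congr (_ + _).
  by case: (fintype.split k) => k'; rewrite !mxE ?cA ?cW.
rewrite big_distrr -big_split /=; apply: eq_bigr => j _.
rewrite !mxE; case: (fintype.split j) => j'; rewrite !mxE ?cB ?cWb; ring.
Qed.

Lemma D_affine (R : realType) (V : normedModType R) (F : V -> R) (v x : V) (L : R) :
  (forall h : R, F (h *: v + x) = F x + h * L) -> 'D_v F x = L.
Proof.
move=> H; rewrite /derive.
apply: cvg_lim; last first.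
  move=> P /= HP. rewrite nbhs_simpl /=.
  near=> h.
  rewrite /= /shift H addrC addKr /GRing.scale /= mulrA mulVf ?mul1r //.
    by case: HP => e /= e0; apply; rewrite /ball_ /= subrr normr0.
  near: h; exact: withinT.
exact: Rhausdorff.
Unshelve. all: by end_near.
Qed.

Definition flin {R : realType} {n m : nat} (f : 'M[R]_(n, m) -> R[i]) :=
  forall (h : R) v x, f (h *: v + x) = (h%:C)%C * f v + f x.

Lemma pdC_lin (R : realType) n m (f : 'M[R]_(n, m) -> R[i]) (a : 'I_n) (b : 'I_m) X :
  flin f -> pdC a b f X = f (delta_mx a b).
Proof.
move=> H; rewrite /pdC (@D_affine _ _ _ _ _ (complex.Re (f (delta_mx a b)))).
  rewrite (@D_affine _ _ _ _ _ (complex.Im (f (delta_mx a b)))).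
    by case: (f _).
  move=> h; rewrite H; case: (f (delta_mx a b)) => c1 c2; case: (f X) => c3 c4 /=; ring.
move=> h; rewrite H; case: (f (delta_mx a b)) => c1 c2; case: (f X) => c3 c4 /=; ring.
Qed.

Lemma pdC_cst (R : realType) n m (c : R[i]) (a : 'I_n) (b : 'I_m) (X : 'M[R]_(n, m)) :
  pdC a b (fun _ => c) X = 0.
Proof.
rewrite /pdC !(@D_affine _ _ _ _ _ (0)) //; move=> h; ring.
Qed.

Lemma flinPhi (R : realType) (p r : nat) (M : 'M[R[i]]_(p + r)) k l :
  flin (fun X => Phihat M X k l).
Proof. move=> h v x; exact: Phihat_lin. Qed.
Section B.
Variables (R : realType) (p r : nat) (M : 'M[R[i]]_(p + r)).
Local Open Scope complex_scope.

Ltac fin := rewrite ?(subr0, addr0, sub0r, add0r, oppr0, rmorph0, rmorph_nat, rmorphN) //;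
  try (case: (_ && _); apply/eqP; rewrite eq_complex /= ?mulr0 ?mulr1 ?mul0r ?mul1r ?subr0 ?addr0 ?oppr0 ?add0r ?sub0r ?eqxx //).

Lemma blk0 i b : Phihat M (delta_mx (lshift (p + (r + r)) i) b) =
  1 *: delta_mx (lshift r i) b + 1 *: (M *m delta_mx (lshift r i) b).
Proof.
rewrite /Phihat delta_mx_ushift col_mxKu col_mxKd !linear0 !scale1r delta_mx_ushift.
by congr (col_mx _ _ + M *m col_mx _ _); apply/matrixP => i' j'; rewrite !mxE //=; fin.
Qed.

Lemma blk1 i b : Phihat M (delta_mx (rshift p (lshift (r + r) i)) b) =
  (-1) *: delta_mx (lshift r i) b + 1 *: (M *m delta_mx (lshift r i) b).
Proof.
rewrite /Phihat delta_mx_dshift delta_mx_ushift !(col_mxKu, col_mxKd) !linear0 scale1r scaleN1r delta_mx_ushift.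
rewrite opp_col_mx oppr0.
by congr (col_mx _ _ + M *m col_mx _ _); apply/matrixP => i' j'; rewrite !mxE //=; fin.
Qed.

Lemma blk2 t b : Phihat M (delta_mx (rshift p (rshift p (lshift r t))) b) =
  1 *: delta_mx (rshift p t) b + 1 *: (M *m delta_mx (rshift p t) b).
Proof.
rewrite /Phihat !delta_mx_dshift delta_mx_ushift !(col_mxKu, col_mxKd) ?linear0 !scale1r.
by congr (col_mx _ _ + M *m col_mx _ _); apply/matrixP => i' j'; rewrite !mxE //=; fin.
Qed.

Lemma blk3 t b : Phihat M (delta_mx (rshift p (rshift p (rshift r t))) b) =
  'i *: delta_mx (rshift p t) b + (- 'i) *: (M *m delta_mx (rshift p t) b).
Proof.
rewrite /Phihat !delta_mx_dshift !(col_mxKu, col_mxKd) ?linear0.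
rewrite scalemxAr !scale_col_mx !scaler0.
congr (col_mx _ _ + M *m col_mx _ _); apply/matrixP => i' j'; rewrite !mxE /=; fin. all: by rewrite ?add0r ?sub0r.
Qed.

Lemma entry (al be : R[i]) (j k : 'I_(p + r)) (b l : 'I_p) :
  (al *: delta_mx j b + be *: (M *m delta_mx j b)) k l
  = (l == b)%:R * (al * (k == j)%:R + be * M k j).
Proof.
rewrite !mxE (bigD1 j) //= big1 => [|j' /negbTE nj]; last by rewrite !mxE nj mulr0.
rewrite !mxE eqxx /= addr0.
by case: (l == b); case: (k == j); rewrite /= ?mulr0 ?mulr1 ?mul0r ?mul1r ?addr0 ?add0r.
Qed.
End B.

Lemma eps_l (R : realType) p n (i : 'I_p) : sE_eps R (lshift n i) = -1.
Proof. by rewrite /sE_eps /= ltn_ord. Qed.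

Lemma eps_r (R : realType) p n (i : 'I_n) : sE_eps R (rshift p i) = 1.
Proof. by rewrite /sE_eps /= ltnNge leq_addr. Qed.

Definition sg (R : realType) {p r : nat} (j : 'I_(p + r)) : R[i] := if (j < p)%N then -1 else 1.

Lemma sg_l (R : realType) p r (i : 'I_p) : sg R (lshift r i) = -1.
Proof. by rewrite /sg /= ltn_ord. Qed.

Lemma sg_r (R : realType) p r (i : 'I_r) : sg R (rshift p i) = 1.
Proof. by rewrite /sg /= ltnNge leq_addr. Qed.

Lemma Ipr_entry (R : realType) p r (j j' : 'I_(p + r)) :
  Ipr R p r j j' = (j == j')%:R * sg R j.
Proof.
rewrite /Ipr; case: (split_ordP j) => i ->; case: (split_ordP j') => i' ->;
  rewrite ?block_mxEul ?block_mxEur ?block_mxEdl ?block_mxEdr !mxE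
    ?eq_lshift ?eq_rshift ?eq_lrshift ?eq_rlshift ?sg_l ?sg_r /=.
- by case: (i == i'); rewrite /= ?mulr1n ?mulr0n ?oppr0; ring.
- by rewrite mul0r.
- by rewrite mul0r.
- by case: (i == i'); rewrite /= ?mulr1n ?mulr0n; ring.
Qed.

Lemma sum_delta (R : realType) n (k : 'I_n) (F : 'I_n -> R[i]) :
  \sum_(j < n) (k == j)%:R * F j = F k.
Proof.
rewrite (bigD1 k) //= eqxx mul1r big1 ?addr0 // => j /negbTE.
by rewrite eq_sym => ->; rewrite mul0r.
Qed.

Lemma key3 (R : realType) (e e' d d' m m' : R[i]) :
  1 * ((e * (1 * d + 1 * m)) * (e' * (1 * d' + 1 * m'))) +
  1 * ((e * ('i%C * d + - 'i%C * m)) * (e' * ('i%C * d' + - 'i%C * m')))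
  = e * e' * 2 * (1 * (d * m' + m * d')).
Proof.
have hI : 'i%C * 'i%C = -1 :> R[i] by rewrite -expr2 sqr_i.
have -> : (e * ('i%C * d + - 'i%C * m)) * (e' * ('i%C * d' + - 'i%C * m'))
  = ('i%C * 'i%C) * (e * e' * (d - m) * (d' - m')) by ring.
rewrite hI; ring.
Qed.

Theorem proposition5p1 (R : realType) (p r : nat) (hp : (0 < p)%N) (hr : (0 < r)%N)
  (M : 'M[R[i]]_(p + r)) (hM : in_soC M) :
  orthogonal_harmonic_family
    (fun f : 'M[R]_(p + (p + (r + r)), p) -> R[i] =>
       exists (k : 'I_(p + r)) (l : 'I_p), f = (fun X => Phihat M X k l)).
Proof.
split.
  move=> f [k [l ->]] X; rewrite /tau big1 // => a _; rewrite big1 // => b _.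
  have -> : pdC a b (fun X => Phihat M X k l) = fun _ => Phihat M (delta_mx a b) k l.
    by apply: funext => Y; rewrite pdC_lin //; exact: flinPhi.
  by rewrite pdC_cst mulr0.
move=> f g [k [l ->]] [k' [l' ->]] X; rewrite /kappa.
have E : forall k l a b, pdC a b (fun X => Phihat M X k l) X = Phihat M (delta_mx a b) k l.
  by move=> k0 l0 a b; rewrite pdC_lin //; exact: flinPhi.
rewrite exchange_big /=; apply: big1 => b _.
under eq_bigr do rewrite !E.
rewrite !big_split_ord /=.
under eq_bigr do rewrite eps_l blk0 !entry.
under [X in _ + (X + _)]eq_bigr do rewrite eps_r blk1 !entry.
under [X in _ + (_ + (X + _))]eq_bigr do rewrite eps_r blk2 !entry.
under [X in _ + (_ + (_ + X))]eq_bigr do rewrite eps_r blk3 !entry.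
rewrite addrA -!big_split /=.
pose G (j : 'I_(p + r)) := sg R j * ((k == j)%:R * M k' j + M k j * (k' == j)%:R).
transitivity ((l == b)%:R * (l' == b)%:R * 2 * \sum_(j < p + r) G j).
  rewrite big_split_ord mulrDr !big_distrr; congr (_ + _); apply: eq_bigr => i _;
    rewrite /G ?sg_l ?sg_r.
    simpl; ring.
  exact: key3.
suff -> : \sum_(j < p + r) G j = 0 by rewrite mulr0.
rewrite /G.
under eq_bigr do rewrite mulrDr.
rewrite big_split /=.
under eq_bigr do rewrite mulrCA.
rewrite sum_delta.
under eq_bigr do rewrite [M k _ * _]mulrC mulrCA.
rewrite sum_delta.
have := congr1 (fun A : 'M[R[i]]_(p + r) => A k' k) hM; rewrite !mxE.
have -> : \sum_j M^T k' j * Ipr R p r j k = sg R k * M k k'.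
  rewrite -[RHS](@sum_delta R _ k (fun j => sg R j * M j k')).
  by apply: eq_bigr => j _; rewrite Ipr_entry mxE eq_sym; ring.
have -> : \sum_j Ipr R p r k' j * M j k = sg R k' * M k' k.
  rewrite -[RHS](@sum_delta R _ k' (fun j => sg R k' * M j k)).
  by apply: eq_bigr => j _; rewrite Ipr_entry; ring.
move=> H.
have sq : forall j : 'I_(p + r), sg R j * sg R j = 1.
  by move=> j; rewrite /sg; case: (j < p)%N; rewrite ?mulrNN mulr1.
transitivity (sg R k * sg R k' * (sg R k * M k k' + sg R k' * M k' k)); last first.
  by rewrite H mulr0.
rewrite mulrDr !mulrA -[sg R k * sg R k' * sg R k]mulrAC sq mul1r.
by rewrite -[sg R k * sg R k' * sg R k']mulrA sq mulr1 addrC.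
Qed.
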